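(* Let $n=n_1\cdots n_\ell>2$ with integers $n_i\ge2$ and let $U=F_{(n_1,\dots,n_\ell)}$ (modes labelled as in the context); in particular $U=F_n$ or $U=H_n$ are allowed. For the $n$-photon distillation protocol determined by $U$ with input $\rho^{(n)}(\epsilon)$: (1) $h_n(\Phi_1)=\frac1n h_n(0)$; (2) $h_n(\epsilon)=h_n(0)-(n-1)h_n(0)\,\epsilon+O(\epsilon^2)$ as $\epsilon\to0$ ($n$ fixed).
   Context: For $m\ge2$, $F_m=\frac{1}{\sqrt m}(e^{2\pi i jk/m})_{0\le j,k\le m-1}$, $F_{(n_1,\dots,n_\ell)}=F_{n_1}\otimes\cdots\otimes F_{n_\ell}$, $H_{2^r}=F_{(2,\dots,2)}$; the basis vector $|m_1\rangle\otimes\cdots\otimes|m_\ell\rangle$ is identified with mode $m_1+n_1m_2+\cdots+(n_1\cdots n_{\ell-1})m_\ell$. Photons carry an external mode in $\{0,\dots,n-1\}$ and an internal state in a space with orthonormal basis $\{\xi_0,\xi_1,\dots\}$; $a_i^\dagger[\xi]$ creates a photon in mode $i$ with internal state $\xi$. $\hat U$ acts by $a_j^\dagger[\xi]\mapsto\sum_iU_{ij}a_i^\dagger[\xi]$. Ideal patterns of $U$: $(s_0,\dots,s_{n-1})$ with $\sum s_i=n$, $s_0=1$, $\langle s_0,\dots,s_{n-1}|\hat U|1,\dots,1\rangle\neq0$ (Fock states without internal degrees of freedom). Distillation protocol with input $\sigma$: apply $\hat U$, count photons (regardless of internal state) in modes $1,\dots,n-1$, set $s_0=n-\sum_{j\ge1}s_j$,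 and herald success iff $(s_0,\dots,s_{n-1})$ is ideal; $h_n(\sigma)$ is the success probability. Input $\rho^{(n)}(\epsilon)$: the photon in mode $i$ (one photon per mode) independently has internal state $\xi_0$ with probability $1-\epsilon$, and otherwise (URS model with parameter $R\ge1$) $\xi_j$ with probability $\epsilon/R$ for each $1\le j\le R$, or (OBB limit) $\xi_{i+1}$ with probability $\epsilon$. $h_n(\epsilon)=h_n(\rho^{(n)}(\epsilon))$, and $h_n(0)$ is the heralding rate for the input $|1,\dots,1\rangle$ with all photons in internal state $\xi_0$. Writing $\rho^{(n)}(\epsilon)=\sum_{k=0}^n\binom nk\epsilon^k(1-\epsilon)^{n-k}\Phi_k$, $\Phi_1$ is the normalized mixture of the terms $a_0^\dagger[\xi_{j_0}]\cdots a_{n-1}^\dagger[\xi_{j_{n-1}}]|\vec0\rangle$ in which exactly one index $j_i$ is nonzero (uniformly over the position $i$ and over the allowed error state). *)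

(* Defs.v *)
From HB Require Import structures.
From mathcomp Require Import all_boot all_order all_algebra all_fingroup.
From mathcomp Require Import reals trigo.
From mathcomp.real_closed Require Import complex.

Set Implicit Arguments.
Unset Strict Implicit.
Unset Printing Implicit Defensive.

Import Order.TTheory GRing.Theory Num.Theory.
Local Open Scope ring_scope.
Local Open Scope complex_scope.

Section Defs.
Variable R : realType.
Local Notation C := R[i].

Definition omega (m : nat) : C := cos (2 * pi / m%:R) +i* sin (2 * pi / m%:R).

Definition fourier_entry (m j k : nat) : C :=
  ((Num.sqrt (m%:R : R))^-1)%:C * omega m ^+ (j * k).

Definition fourier (m : nat) : 'M[C]_m :=
  \matrix_(j < m, k < m) fourier_entry m j k.

Definition prefix_prod (ns : seq nat) (t : nat) : nat := \prod_(k <- take t ns) k.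

(* the t-th digit m_{t+1} of mode x = m_1 + n_1 m_2 + ... + (n_1...n_{l-1}) m_l *)
Definition digit (ns : seq nat) (t x : nat) : nat :=
  (x %/ prefix_prod ns t) %% nth 0 ns t.

Definition dimn (ns : seq nat) : nat := \prod_(k <- ns) k.

(* F_(n_1,...,n_l) = F_{n_1} (x) ... (x) F_{n_l}, with the mode labelling above *)
Definition fourier_tens (ns : seq nat) : 'M[C]_(dimn ns) :=
  \matrix_(x, y) \prod_(t < size ns)
     fourier_entry (nth 0 ns t) (digit ns t x) (digit ns t y).

Variable n : nat.
Implicit Types (U : 'M[C]_n).

(* An output configuration: photon injected in mode k ends in mode o k. *)
Definition pattern (o : {ffun 'I_n -> 'I_n}) : {ffun 'I_n -> 'I_n.+1} :=
  [ffun i => inord #|[pred k | o k == i]|].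

Definition camp U (o : {ffun 'I_n -> 'I_n}) : C := \prod_(k < n) U (o k) k.

Definition s0 (s : {ffun 'I_n -> 'I_n.+1}) : nat := \sum_(i : 'I_n | val i == 0%N) s i.

(* <s| U^ |1,...,1>  for indistinguishable photons:                   *)
(* U^|1..1> = sum_o camp o prod_k a^dag_{o k}|0> and                  *)
(* prod_k a^dag_{o k}|0> = sqrt(prod_i s_i!) |s>  when pattern o = s.  *)
Definition ideal_amp U (s : {ffun 'I_n -> 'I_n.+1}) : C :=
  (Num.sqrt ((\prod_(i < n) (s i)`!)%:R : R))%:C *
  \sum_(o : {ffun 'I_n -> 'I_n} | pattern o == s) camp U o.

Definition ideal U (s : {ffun 'I_n -> 'I_n.+1}) : bool :=
  [&& (\sum_(i < n) (s i : nat) == n)%N, s0 s == 1%N & ideal_amp U s != 0].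

(* Bosonic inner product  < o' ; j | o ; j >  of the states
   prod_k a^dag_{o k}[xi_{j k}] |0>  (permanent of the Gram matrix). *)
Definition gram (j : 'I_n -> nat) (o' o : {ffun 'I_n -> 'I_n}) : C :=
  \sum_(sg : {perm 'I_n})
     \prod_(k < n) ((o' k == o (sg k)) && (j k == j (sg k)))%:R.

(* Probability of detecting occupation pattern s (photons counted irrespective
   of internal state) after applying U^ to the pure input
   a_0^dag[xi_{j 0}] ... a_{n-1}^dag[xi_{j (n-1)}] |0>:  || P_s U^ psi ||^2. *)
Definition pattern_prob U (j : 'I_n -> nat) (s : {ffun 'I_n -> 'I_n.+1}) : R :=
  complex.Re (\sum_(o : {ffun 'I_n -> 'I_n} | pattern o == s)
                \sum_(o' : {ffun 'I_n -> 'I_n} | pattern o' == s)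
                   (camp U o')^* * camp U o * gram j o' o).

(* Heralding probability for the pure labelled input j.  Since the photon
   number is conserved, n - sum_{i>=1} s_i is the actual count in mode 0. *)
Definition herald_pure U (j : 'I_n -> nat) : R :=
  \sum_(s : {ffun 'I_n -> 'I_n.+1} | ideal U s) pattern_prob U j s.

End Defs.

Inductive err_model := URS of nat | OBB.

Definition err_valid (m : err_model) : bool :=
  match m with URS r => (0 < r)%N | OBB => true end.

(* number of allowed error states of a photon *)
Definition nerr (m : err_model) : nat := match m with URS r => r | OBB => 1%N end.

(* internal-state label of the photon in mode i when its choice is k
   (k = 0: xi_0 ; k >= 1: the k-th allowed error state) *)
Definition err_label (m : err_model) (i k : nat) : nat :=
  match m with URS _ => k | OBB => if k == 0%N then 0%N else i.+1 end.

Section Mixed.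
Variable R : realType.
Variable n : nat.
Local Notation C := R[i].

Definition labels (m : err_model) (c : {ffun 'I_n -> 'I_(nerr m).+1}) : 'I_n -> nat :=
  fun i => err_label m i (c i).

Definition h_eps (m : err_model) (U : 'M[C]_n) (eps : R) : R :=
  \sum_(c : {ffun 'I_n -> 'I_(nerr m).+1})
     (\prod_(i < n) (if c i == ord0 then 1 - eps else eps / (nerr m)%:R))
     * herald_pure U (labels c).

(* h_n(Phi_1): Phi_1 is the uniform mixture over the position of the single
   erroneous photon and over its allowed error state. *)
Definition h_Phi1 (m : err_model) (U : 'M[C]_n) : R :=
  ((n * nerr m)%:R)^-1 *
  \sum_(c : {ffun 'I_n -> 'I_(nerr m).+1} | #|[pred i | c i != ord0]| == 1%N)
     herald_pure U (labels c).
End Mixed.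

(* Main.v *)
Require Import Defs.
From HB Require Import structures.
From mathcomp Require Import all_boot all_order all_algebra all_fingroup.
From mathcomp Require Import reals trigo.
From mathcomp.real_closed Require Import complex.
From mathcomp Require Import zify ring lra.
Import Order.TTheory GRing.Theory Num.Theory.
Local Open Scope ring_scope.
Set Implicit Arguments.
Unset Strict Implicit.
Unset Printing Implicit Defensive.


Section Abs.
Variable R : realType.
Variable n : nat.
Local Notation C := R[i].
Implicit Types (o : {ffun 'I_n -> 'I_n}) (t : {perm 'I_n}).

Definition fcomp o t : {ffun 'I_n -> 'I_n} := [ffun k => o (t k)].

Lemma fcompA o a b : fcomp (fcomp o a) b = fcomp o (b * a)%g.
Proof. by apply/ffunP => k; rewrite !ffunE permM. Qed.

Lemma fcompK o t : fcomp (fcomp o t) t^-1%g = o.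
Proof. by apply/ffunP => k; rewrite !ffunE permKV. Qed.

Lemma fcompKV o t : fcomp (fcomp o t^-1%g) t = o.
Proof. by apply/ffunP => k; rewrite !ffunE permK. Qed.

Lemma fcomp_inj t : injective (fcomp ^~ t).
Proof. by move=> o1 o2 /(congr1 (fcomp ^~ t^-1%g)); rewrite !fcompK. Qed.

Lemma card_pat o (x : 'I_n) : (#|[pred k | o k == x]| < n.+1)%N.
Proof. by rewrite ltnS (leq_trans (max_card _)) // card_ord. Qed.

Lemma pattern_fcomp o t : pattern (fcomp o t) = pattern o.
Proof.
apply/ffunP => x; rewrite !ffunE; congr inord.
have E := card_preim (@perm_inj _ t) [pred k | o k == x].
transitivity #|[predI codom t & [pred k | o k == x]]|.
  by rewrite -E; apply: eq_card => k; rewrite !inE ffunE.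
by apply: eq_card => k; rewrite !inE -[k in k \in codom _](permKV t) codom_f.
Qed.

Lemma prod_pattern (phi : 'I_n -> C) o :
  \prod_k phi (o k) = \prod_x phi x ^+ (pattern o x).
Proof.
rewrite (partition_big o xpredT) //=; apply: eq_bigr => x _.
rewrite ffunE inordK ?card_pat //.
rewrite -prodr_const; apply: eq_big => k //; by [|move=> /eqP ->].
Qed.


Local Open Scope complex_scope.
Variable U : 'M[C]_n.
Implicit Types (s : {ffun 'I_n -> 'I_n.+1}).

Lemma camp_fcompV t (phi : 'I_n -> C) :
  (forall x k, U x (t k) = phi x * U x k) ->
  forall o, camp U (fcomp o t^-1%g) = (\prod_x phi x ^+ pattern o x) * camp U o.
Proof.
move=> Ht o; rewrite /camp (reindex_inj (@perm_inj _ t)) /=.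
under eq_bigr do rewrite ffunE permK Ht.
by rewrite big_split /= prod_pattern.
Qed.

Lemma ztl t (phi : 'I_n -> C) s :
  (forall x k, U x (t k) = phi x * U x k) ->
  \sum_(o | pattern o == s) camp U o != 0 ->
  forall o, pattern o == s -> camp U (fcomp o t^-1%g) = camp U o.
Proof.
move=> Ht nz o /eqP Po.
set c := \prod_x phi x ^+ s x.
have Hc o' : pattern o' = s -> camp U (fcomp o' t^-1%g) = c * camp U o'.
  by move=> Po'; rewrite (camp_fcompV Ht) Po'.
suff c1 : c = 1 by rewrite Hc // c1 mul1r.
have E : \sum_(o | pattern o == s) camp U o = c * \sum_(o | pattern o == s) camp U o.
  rewrite mulr_sumr [LHS](reindex_inj (@fcomp_inj t^-1%g)) /=.
  apply: eq_big => o'; first by rewrite pattern_fcomp.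
  by rewrite pattern_fcomp => /eqP Po'; rewrite Hc.
have : (1 - c) * \sum_(o | pattern o == s) camp U o = 0.
  by rewrite mulrBl mul1r -E subrr.
move/eqP; rewrite mulf_eq0 (negbTE nz) orbF subr_eq0 => /eqP ->//.
Qed.

Definition W s (g g' : 'I_n) : C :=
  \sum_(o | pattern o == s) camp U o *
    \sum_(sg : {perm 'I_n} | sg g == g') (camp U (fcomp o sg))^*.

Section Trans.
Variable s : {ffun 'I_n -> 'I_n.+1}.
Hypothesis nz : \sum_(o | pattern o == s) camp U o != 0.
Variable t : {perm 'I_n}.
Variable phi : 'I_n -> C.
Hypothesis Ht : forall x k, U x (t k) = phi x * U x k.

Lemma W_r g g' : W s g (t g') = W s g g'.
Proof.
rewrite /W.
transitivity (\sum_(o | pattern o == s) camp U o *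
    \sum_(sg : {perm 'I_n} | sg g == g') (camp U (fcomp (fcomp o t) sg))^*).
  apply: eq_bigr => o _; congr (_ * _).
  rewrite (reindex_inj (@mulIg _ t)) /=; apply: eq_big => sg.
    by rewrite permM (inj_eq (@perm_inj _ t)).
  by rewrite fcompA.
rewrite (reindex_inj (@fcomp_inj t^-1%g)) /=; apply: eq_big => o.
  by rewrite pattern_fcomp.
by rewrite pattern_fcomp => Po; rewrite fcompKV (ztl Ht nz Po).
Qed.

Lemma W_l g g' : W s (t g) g' = W s g g'.
Proof.
rewrite /W; apply: eq_bigr => o Po; congr (_ * _).
rewrite (reindex_inj (@mulgI _ t^-1%g)) /=; apply: eq_big => sg.
  by rewrite permM permK.
move=> _; rewrite -fcompA (ztl Ht nz) // pattern_fcomp //.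
Qed.
End Trans.

Hypothesis Htr : forall g g' : 'I_n, exists t : {perm 'I_n},
  t g = g' /\ exists phi : 'I_n -> C, forall x k, U x (t k) = phi x * U x k.

Lemma W_const s g g' g0 : \sum_(o | pattern o == s) camp U o != 0 ->
  W s g g' = W s g0 g0.
Proof.
move=> nz.
have [t1 [<- [phi1 H1]]] := Htr g0 g.
have [t2 [<- [phi2 H2]]] := Htr g0 g'.
by rewrite (W_l nz H1) (W_r nz H2).
Qed.


Definition G (sg : {perm 'I_n}) o' o : C := \prod_k (o' k == o (sg k))%:R.

Lemma prod_bool (I : finType) (b : pred I) :
  \prod_(k : I) ((b k)%:R : C) = [forall k, b k]%:R.
Proof.
case: (boolP [forall k, b k]) => [/forallP H|/forallPn [k Hk]].
  by rewrite big1 // => k _; rewrite H.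
by rewrite (bigD1 k) //= (negbTE Hk) mul0r.
Qed.

Lemma G_eq sg o' o : G sg o' o = (o' == fcomp o sg)%:R.
Proof.
rewrite /G prod_bool; suff -> : [forall k, o' k == o (sg k)] = (o' == fcomp o sg) by [].
apply/idP/idP => [/forallP H|/eqP ->].
  by apply/eqP/ffunP => k; rewrite ffunE; apply/eqP.
by apply/forallP => k; rewrite ffunE.
Qed.

Lemma reduce s (b : pred {perm 'I_n}) :
  \sum_(o | pattern o == s) \sum_(o' | pattern o' == s)
     (camp U o')^* * camp U o * (\sum_(sg : {perm 'I_n}) (b sg)%:R * G sg o' o)
  = \sum_(o | pattern o == s) camp U o *
       \sum_(sg : {perm 'I_n} | b sg) (camp U (fcomp o sg))^*.
Proof.
apply: eq_bigr => o Po.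
under eq_bigr do rewrite mulr_sumr.
rewrite exchange_big /= mulr_sumr [RHS]big_mkcond /=; apply: eq_bigr => sg _.
case: (b sg); last by rewrite big1 // => o' _; rewrite mul0r mulr0.
rewrite (bigD1 (fcomp o sg)) /=; last by rewrite pattern_fcomp.
rewrite G_eq eqxx mul1r mulr1 big1 ?addr0; first by rewrite mulrC.
by move=> o' /andP[_ /negbTE]; rewrite G_eq => ->; rewrite mul1r mulr0.
Qed.

Lemma main_id s (g0 : 'I_n) : \sum_(o | pattern o == s) camp U o != 0 ->
  \sum_(i < n) \sum_(o | pattern o == s) \sum_(o' | pattern o' == s)
     (camp U o')^* * camp U o * (\sum_(sg : {perm 'I_n}) (sg i == i)%:R * G sg o' o)
  = \sum_(o | pattern o == s) \sum_(o' | pattern o' == s)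
     (camp U o')^* * camp U o * (\sum_(sg : {perm 'I_n}) G sg o' o).
Proof.
move=> nz.
have -> : \sum_(o | pattern o == s) \sum_(o' | pattern o' == s)
     (camp U o')^* * camp U o * (\sum_(sg : {perm 'I_n}) G sg o' o)
  = \sum_(o | pattern o == s) \sum_(o' | pattern o' == s)
     (camp U o')^* * camp U o * (\sum_(sg : {perm 'I_n}) (xpredT sg)%:R * G sg o' o).
  by do 2! (apply: eq_bigr => ? _); congr (_ * _); apply: eq_bigr => sg _; rewrite mul1r.
rewrite reduce.
under eq_bigr do rewrite reduce -/(W s _ _) (W_const _ _ g0 nz).
transitivity (\sum_(g' < n) W s g0 g').
  by apply: eq_bigr => g' _; rewrite (W_const _ _ g0 nz).
rewrite /W exchange_big /=; apply: eq_bigr => o _; rewrite -mulr_sumr; congr (_ * _).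
by rewrite [RHS](partition_big (fun sg : {perm 'I_n} => sg g0) xpredT).
Qed.

End Abs.


Section Radix.
Local Open Scope nat_scope.

Definition E (ns : seq nat) (d : nat -> nat) : nat :=
  \sum_(t < size ns) prefix_prod ns t * d t.

Lemma pp0 a ns : prefix_prod (a :: ns) 0 = 1.
Proof. by rewrite /prefix_prod take0 big_nil. Qed.

Lemma ppS a ns t : prefix_prod (a :: ns) t.+1 = a * prefix_prod ns t.
Proof. by rewrite /prefix_prod /= big_cons. Qed.

Lemma digit0 a ns x : digit (a :: ns) 0 x = x %% a.
Proof. by rewrite /digit pp0 divn1. Qed.

Lemma digitS a ns t x : digit (a :: ns) t.+1 x = digit ns t (x %/ a).
Proof. by rewrite /digit ppS divnMA. Qed.

Lemma E_cons a ns d : E (a :: ns) d = d 0 + a * E ns (fun t => d t.+1).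
Proof.
rewrite /E /= big_ord_recl pp0 mul1n; congr (_ + _).
rewrite big_distrr /=; apply: eq_bigr => t _.
by rewrite ppS mulnA.
Qed.

Lemma dimn_cons a ns : dimn (a :: ns) = a * dimn ns.
Proof. by rewrite /dimn big_cons. Qed.

Lemma E_digit ns x : all (fun k => 0 < k) ns -> x < dimn ns ->
  E ns (fun t => digit ns t x) = x.
Proof.
elim: ns x => [|a ns IH] x.
  by rewrite /dimn big_nil /E big_ord0; case: x.
move=> /= /andP[a0 Hns]; rewrite dimn_cons => Hx.
rewrite E_cons digit0.
have -> : E ns (fun t => digit (a :: ns) t.+1 x) = E ns (fun t => digit ns t (x %/ a)).
  by apply: eq_bigr => t _; rewrite digitS.
rewrite IH //; last by rewrite ltn_divLR // mulnC.
by rewrite {3}(divn_eq x a) addnC mulnC.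
Qed.

Lemma digit_E ns d : all (fun k => 0 < k) ns ->
  (forall t, t < size ns -> d t < nth 0 ns t) ->
  E ns d < dimn ns /\ forall t, t < size ns -> digit ns t (E ns d) = d t.
Proof.
elim: ns d => [|a ns IH] d.
  by move=> _ _; rewrite /E big_ord0 /dimn big_nil.
move=> /= /andP[a0 Hns] Hd.
have [H1 H2] := IH (fun t => d t.+1) Hns (fun t Ht => Hd t.+1 Ht).
have d0 : d 0 < a by exact: (Hd 0).
rewrite E_cons dimn_cons; split.
  have : E ns (fun t => d t.+1) + 1 <= dimn ns by rewrite addn1.
  move=> H; apply: (@leq_trans (a * (E ns (fun t => d t.+1) + 1))); last by rewrite leq_mul2l H orbT.
  by rewrite mulnDr muln1 addnC ltn_add2l.
case=> [|t] Ht.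
  by rewrite digit0 addnC mulnC modnMDl modn_small.
rewrite digitS addnC mulnC divnMDl // divn_small // addn0.
exact: H2.
Qed.

End Radix.

Section Four.
Variable R : realType.
Local Open Scope complex_scope.

Lemma expi_mul (a b : R) :
  (cos a +i* sin a) * (cos b +i* sin b) = cos (a+b) +i* sin (a+b).
Proof.
rewrite cosD sinD.
apply/eqP; rewrite eq_complex /=; apply/andP; split; apply/eqP; ring.
Qed.

Lemma expi_exp (a : R) k : (cos a +i* sin a) ^+ k = cos (a *+ k) +i* sin (a *+ k).
Proof.
elim: k => [|k IH]; first by rewrite expr0 mulr0n cos0 sin0.
by rewrite exprS IH expi_mul mulrS.
Qed.

Lemma omega_m (m : nat) : (0 < m)%N -> omega R m ^+ m = 1.
Proof.
move=> m0; rewrite /omega expi_exp.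
have -> : (2 * pi / m%:R) *+ m = pi *+ 2 :> R.
  rewrite -mulr_natr mulrAC -mulrA divff ?mulr1 ?pnatr_eq0 -?lt0n //.
  by rewrite mulr_natl.
by rewrite cos2pi sin2pi.
Qed.

Lemma fe_shift m j k h : (0 < m)%N ->
  fourier_entry R m j ((k + h) %% m) = omega R m ^+ (j * h) * fourier_entry R m j k.
Proof.
move=> m0; rewrite /fourier_entry mulrCA; congr (_ * _).
rewrite -exprD -mulnDr.
have -> : (j * (h + k) = m * (j * ((k + h) %/ m)) + j * ((k + h) %% m))%N.
  by rewrite [in LHS]addnC {1}(divn_eq (k + h) m) mulnDr; lia.
by rewrite exprD (exprM _ m) omega_m // expr1n mul1r.
Qed.

Variable ns : seq nat.
Hypothesis Hpos : all (fun k => 0 < k)%N ns.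
Local Notation D := (dimn ns).

Lemma nth_pos t : (t < size ns)%N -> (0 < nth 0 ns t)%N.
Proof. by move=> Ht; exact: (all_nthP 0 Hpos). Qed.

Definition addd (h k : nat) : nat :=
  E ns (fun t => (digit ns t k + digit ns t h) %% nth 0 ns t)%N.

Lemma addd_spec h k : (addd h k < D)%N /\ forall t, (t < size ns)%N ->
  digit ns t (addd h k) = ((digit ns t k + digit ns t h) %% nth 0 ns t)%N.
Proof. by apply: digit_E => // t Ht; rewrite ltn_pmod // nth_pos. Qed.

Definition addo (h k : 'I_D) : 'I_D := Ordinal (proj1 (addd_spec h k)).

Lemma addo_inj h : injective (addo h).
Proof.
move=> k1 k2 /(congr1 val) /= Heq; apply: val_inj => /=.
rewrite -(E_digit Hpos (ltn_ord k1)) -(E_digit Hpos (ltn_ord k2)).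
apply: eq_bigr => t _; congr (_ * _)%N.
have := congr1 (digit ns t) Heq.
rewrite !(proj2 (addd_spec _ _)) // => /eqP; rewrite eqn_modDr.
rewrite !modn_small ?ltn_pmod ?nth_pos //; first by move/eqP.
Qed.

Definition aperm h : {perm 'I_D} := perm (@addo_inj h).

Lemma U_shift h x k : fourier_tens R ns x (aperm h k) =
  (\prod_(t < size ns) omega R (nth 0 ns t) ^+ (digit ns t x * digit ns t h)) *
  fourier_tens R ns x k.
Proof.
rewrite !mxE permE /= -big_split; apply: eq_bigr => t _ /=.
by rewrite (proj2 (addd_spec _ _)) // fe_shift // nth_pos.
Qed.

Lemma U_trans (g g' : 'I_D) : exists t : {perm 'I_D}, t g = g' /\
  exists phi : 'I_D -> R[i], forall x k,
    fourier_tens R ns x (t k) = phi x * fourier_tens R ns x k.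
Proof.
pose dh t := ((digit ns t g' + (nth 0 ns t - digit ns t g)) %% nth 0 ns t)%N.
have Hh := @digit_E ns dh Hpos (fun t Ht => ltn_pmod _ (nth_pos Ht)).
exists (aperm (Ordinal (proj1 Hh))); split; last first.
  by eexists => x k; rewrite U_shift.
apply: val_inj; rewrite permE /= /addd.
rewrite -[RHS](E_digit Hpos (ltn_ord g')); apply: eq_bigr => t _; congr (_ * _)%N.
rewrite (proj2 Hh) // /dh modnDmr.
have Hg : (digit ns t g <= nth 0 ns t)%N by apply: ltnW; rewrite ltn_pmod // nth_pos.
have -> : (digit ns t g + (digit ns t g' + (nth 0 ns t - digit ns t g)) =
   digit ns t g' + nth 0 ns t)%N by lia.
by rewrite modnDr modn_small // ltn_pmod // nth_pos.
Qed.

End Four.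


Section Gen.
Variable R : realType.
Variable n : nat.
Variable m : err_model.
Local Notation r := (nerr m).
Implicit Types (c : {ffun 'I_n -> 'I_r.+1}).

Definition kc c := #|[pred i | c i != ord0]|.

Lemma w_formula c (a b : R) :
  \prod_(i < n) (if c i == ord0 then a else b) = a ^+ (n - kc c) * b ^+ (kc c).
Proof.
rewrite (bigID [pred i | c i == ord0]) /=.
have -> : \prod_(i | c i == ord0) (if c i == ord0 then a else b) = a ^+ #|[pred i | c i == ord0]|.
  by rewrite -prodr_const; apply: eq_big => // i /= ->.
have -> : \prod_(i | c i != ord0) (if c i == ord0 then a else b) = b ^+ kc c.
  by rewrite -prodr_const; apply: eq_big => // i /= /negbTE ->.
congr (_ ^+ _ * _).
have E := cardC [pred i | c i != ord0]; rewrite card_ord in E.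
have E2 : #|[pred i | c i == ord0]| = #|[predC [pred i | c i != ord0]]|.
  by apply: eq_card => i; rewrite !inE negbK.
rewrite /kc E2; transitivity (#|[pred i | c i != ord0]| + #|[predC [pred i | c i != ord0]]| - #|[pred i | c i != ord0]|)%N; first by rewrite addKn.
by rewrite E.
Qed.

Lemma pow_bound1 (e : R) k : 0 <= e <= 1 -> `|(1 - e) ^+ k - 1| <= k%:R * e.
Proof.
move=> /andP[e0 e1]; have e1' : 0 <= 1 - e by rewrite subr_ge0.
elim: k => [|k IH]; first by rewrite expr0 subrr normr0 mul0r.
have -> : (1 - e) ^+ k.+1 - 1 = (1 - e) * ((1 - e) ^+ k - 1) - e by rewrite exprS; ring.
rewrite (le_trans (ler_normB _ _)) // normrM (ger0_norm e0) (ger0_norm e1').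
have : (1 - e) * `|(1 - e) ^+ k - 1| <= `|(1 - e) ^+ k - 1|.
  by rewrite ler_piMl // lerBlDr lerDl.
rewrite -natr1 mulrDl mul1r; lra.
Qed.

Lemma pow_bound2 (e : R) k : 0 <= e <= 1 ->
  `|(1 - e) ^+ k - 1 + k%:R * e| <= (k ^ 2)%:R * e ^+ 2.
Proof.
move=> /andP[e0 e1]; have e1' : 0 <= 1 - e by rewrite subr_ge0.
elim: k => [|k IH]; first by rewrite expr0 mul0r addr0 subrr normr0 mul0r.
have -> : (1 - e) ^+ k.+1 - 1 + k.+1%:R * e = (1 - e) * ((1 - e) ^+ k - 1 + k%:R * e) + k%:R * e ^+ 2.
  by rewrite exprS -natr1; ring.
rewrite (le_trans (ler_normD _ _)) // normrM (ger0_norm e1') (normrM (k%:R)) normr_nat (ger0_norm (exprn_ge0 2 e0)).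
have : (1 - e) * `|(1 - e) ^+ k - 1 + k%:R * e| <= `|(1 - e) ^+ k - 1 + k%:R * e|.
  by rewrite ler_piMl // lerBlDr lerDl.
have -> : ((k.+1) ^ 2)%:R = (k ^ 2)%:R + (k.*2)%:R + 1 :> R.
  by rewrite -natrD natr1; apply/eqP; rewrite eqr_nat; apply/eqP; lia.
have : 0 <= (k.*2)%:R * e ^+ 2 :> R by rewrite mulr_ge0 ?exprn_ge0.
have : (k%:R : R) <= (k.*2)%:R by rewrite ler_nat -addnn leq_addr.
have : 0 <= e ^+ 2 by rewrite exprn_ge0.
nra.
Qed.


Definition c0 : {ffun 'I_n -> 'I_r.+1} := [ffun => ord0].

Lemma kc0 c : (kc c == 0%N) = (c == c0).
Proof.
apply/eqP/eqP => [H|->].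
  apply/ffunP => i; rewrite ffunE; have := card0_eq H i; rewrite !inE.
  by move/negbFE/eqP.
by rewrite /kc; apply: eq_card0 => i; rewrite !inE ffunE eqxx.
Qed.

Definition wt c (e : R) := \prod_(i < n) (if c i == ord0 then 1 - e else e / r%:R).

Lemma d_bound c (e : R) : 0 <= e <= 1 -> (0 < n)%N -> (0 < r)%N ->
  `| wt c e - (kc c == 0%N)%:R * (1 - n%:R * e) - (kc c == 1%N)%:R * (e / r%:R) |
  <= (n ^ 2)%:R * e ^+ 2.
Proof.
move=> /andP[e0 e1] n0 r0.
have e1' : 0 <= 1 - e by rewrite subr_ge0.
have rp : 0 < r%:R :> R by rewrite ltr0n.
have f0 : 0 <= e / r%:R by rewrite divr_ge0 ?ler0n.
have fe : e / r%:R <= e.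
  by rewrite ler_pdivrMr // ler_peMr // ler1n.
have en : e ^+ 2 <= (n ^ 2)%:R * e ^+ 2.
  by rewrite ler_peMl ?exprn_ge0 // ler1n expn_gt0 n0.
rewrite /wt w_formula.
have kn : (kc c <= n)%N by rewrite /kc (leq_trans (max_card _)) // card_ord.
case Ek: (kc c) kn => [|[|k]] kn /=.
- rewrite subn0 expr0 mulr1 mul1r mul0r subr0.
  have -> : (1 - e) ^+ n - (1 - n%:R * e) = (1 - e) ^+ n - 1 + n%:R * e by ring.
  by apply: pow_bound2; rewrite e0 e1.
- rewrite expr1 mul0r subr0 mul1r.
  have -> : (1 - e) ^+ (n - 1) * (e / r%:R) - e / r%:R =
     (e / r%:R) * ((1 - e) ^+ (n - 1) - 1) by ring.
  rewrite normrM (ger0_norm f0).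
  have H2 : `|(1 - e) ^+ (n - 1) - 1| <= (n - 1)%:R * e by apply: pow_bound1; rewrite e0 e1.
  have H3 : ((n - 1)%:R : R) <= (n ^ 2)%:R by rewrite ler_nat; nia.
  have H4 : 0 <= `|(1 - e) ^+ (n - 1) - 1| by [].
  apply: (le_trans (ler_pM f0 H4 fe H2)).
  rewrite mulrCA -expr2; apply: ler_wpM2r; rewrite ?exprn_ge0 //.
- rewrite !mul0r !subr0 normrM !ger0_norm ?exprn_ge0 //.
  apply: le_trans en.
  have A1 : (1 - e) ^+ (n - k.+2) <= 1 by rewrite exprn_ile1 // lerBlDr lerDl.
  have A2 : (e / r%:R) ^+ k.+2 <= e ^+ 2.
    rewrite exprS exprS mulrA expr2 -[X in _ <= X]mulr1.
    apply: ler_pM; rewrite ?mulr_ge0 ?exprn_ge0 ?exprn_ile1 ?invr_ge0 ?ler0n //; [exact: ler_pM | exact: le_trans fe e1].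
  rewrite -[X in _ <= X]mul1r; apply: ler_pM => //; exact: exprn_ge0.
Qed.


Lemma h0_eq (U : 'M[R[i]]_n) : h_eps m U 0 = herald_pure U (labels c0).
Proof.
have wt0 c : wt c 0 = (c == c0)%:R.
  rewrite /wt w_formula -kc0; case: (kc c) => [|k] /=.
    by rewrite subr0 expr1n expr0 mulr1.
  by rewrite mul0r exprS mul0r mulr0.
have -> : h_eps m U 0 = \sum_c wt c 0 * herald_pure U (labels c) by [].
rewrite (bigD1 c0) //= wt0 eqxx mul1r big1 ?addr0 // => c /negbTE.
by rewrite wt0 => ->; rewrite mul0r.
Qed.

Lemma part2 (U : 'M[R[i]]_n) : (0 < n)%N -> (0 < r)%N ->
  h_Phi1 m U = n%:R^-1 * h_eps m U 0 ->
  exists K delta : R, 0 < delta /\ forall eps : R, 0 <= eps < delta ->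
   `| h_eps m U eps - (h_eps m U 0 - (n - 1)%:R * h_eps m U 0 * eps) | <= K * eps ^+ 2.
Proof.
move=> n0 r0 HP.
set H := fun c => herald_pure U (labels c).
have h_eq e : h_eps m U e = \sum_c wt c e * H c by [].
have wt0 c : wt c 0 = (c == c0)%:R.
  rewrite /wt w_formula -kc0; case: (kc c) => [|k] /=.
    by rewrite subr0 expr1n expr0 mulr1.
  by rewrite mul0r exprS mul0r mulr0.
have h0 : h_eps m U 0 = H c0.
  rewrite h_eq (bigD1 c0) //= wt0 eqxx mul1r big1 ?addr0 // => c /negbTE.
  by rewrite wt0 => ->; rewrite mul0r.
have nz : (n * r)%:R != 0 :> R by rewrite pnatr_eq0 -lt0n muln_gt0 n0 r0.
have nz' : n%:R != 0 :> R by rewrite pnatr_eq0 -lt0n n0.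
have rz : r%:R != 0 :> R by rewrite pnatr_eq0 -lt0n r0.
have s1 : \sum_(c | kc c == 1%N) H c = r%:R * H c0.
  move: HP; rewrite /h_Phi1 h0 => E.
  transitivity ((n * r)%:R * (((n * r)%:R)^-1 * \sum_(c | kc c == 1%N) H c)).
    by rewrite mulrA divff ?mul1r.
  have -> : ((n * r)%:R)^-1 * \sum_(c | kc c == 1%N) H c = n%:R^-1 * H c0 by rewrite -E.
  by rewrite natrM; field.
exists ((n ^ 2)%:R * \sum_c `|H c|), 1; split; first exact: ltr01.
move=> e /andP[e0 e1].
have key : h_eps m U e - (h_eps m U 0 - (n - 1)%:R * h_eps m U 0 * e) =
  \sum_c (wt c e - (kc c == 0%N)%:R * (1 - n%:R * e) - (kc c == 1%N)%:R * (e / r%:R)) * H c.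
  rewrite h0 h_eq.
  under [RHS]eq_bigr do rewrite !mulrBl.
  rewrite !sumrB.
  have -> : \sum_c (kc c == 0%N)%:R * (1 - n%:R * e) * H c = (1 - n%:R * e) * H c0.
    rewrite (bigD1 c0) //= big1 ?addr0; first by rewrite (_ : kc c0 == 0%N) ?mul1r // kc0.
    by move=> c /negbTE; rewrite -kc0 => ->; rewrite !mul0r.
  have -> : \sum_c (kc c == 1%N)%:R * (e / r%:R) * H c = e / r%:R * (r%:R * H c0).
    rewrite -s1 mulr_sumr [RHS]big_mkcond /=; apply: eq_bigr => c _.
    by case: (kc c == 1%N); rewrite ?mul1r ?mul0r.
  rewrite natrB //; field; exact: rz.
rewrite key.
apply: (le_trans (ler_norm_sum _ _ _)).
rewrite mulr_sumr mulr_suml.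
apply: ler_sum => c _.
rewrite normrM mulrAC.
apply: ler_wpM2r; first exact: normr_ge0.
apply: d_bound => //.
by rewrite e0 ltW.
Qed. End Gen.


Lemma labels_eq0 n m (c : {ffun 'I_n -> 'I_(nerr m).+1}) k :
  (labels c k == 0%N) = (c k == ord0).
Proof.
rewrite /labels; move: c; case: m => [r|] c /=; first by [].
case: (c k) => [[|v] Hv] /=; first by apply/esym/eqP/val_inj.
by [].
Qed.

Lemma natr_and (R : realType) (a b : bool) : ((a && b)%:R : R[i]) = a%:R * b%:R.
Proof. by case: a; case: b; rewrite ?mul1r ?mul0r. Qed.

Section P1.
Variable R : realType.
Variable n : nat.
Local Open Scope complex_scope.

Lemma gram_single (j : 'I_n -> nat) i o' o :
  (forall k, k != i -> j k = 0%N) -> j i != 0%N ->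
  gram R j o' o = \sum_(sg : {perm 'I_n}) (sg i == i)%:R * G R sg o' o.
Proof.
move=> Hj Hi; apply: eq_bigr => sg _.
under eq_bigr do rewrite natr_and.
rewrite big_split /= mulrC; congr (_ * _).
case: (eqVneq (sg i) i) => Hs.
  apply: big1 => k _; case: (eqVneq k i) => [->|Hk]; first by rewrite Hs eqxx.
  rewrite !Hj ?eqxx //; apply: contraNneq Hk => E.
  by apply/eqP; apply: (@perm_inj _ sg); rewrite E Hs.
by rewrite (bigD1 i) //= (Hj (sg i) Hs) (negbTE Hi) mul0r.
Qed.

Lemma gram_const (j : 'I_n -> nat) o' o :
  (forall k, j k = 0%N) ->
  gram R j o' o = \sum_(sg : {perm 'I_n}) G R sg o' o.
Proof.
move=> Hj; apply: eq_bigr => sg _; apply: eq_bigr => k _.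
by rewrite !Hj eqxx andbT.
Qed.

End P1.

Section Count.
Variable n : nat.
Variable m : err_model.
Local Notation r := (nerr m).
Implicit Types (c : {ffun 'I_n -> 'I_r.+1}).

Lemma single_zero c i : kc c == 1%N -> c i != ord0 -> forall k, k != i -> c k == ord0.
Proof.
move=> /eqP H1 Hi k Hk.
have E := cardD1 i [pred j | c j != ord0].
rewrite -/(kc c) H1 inE Hi /= add1n in E.
have /card0_eq/(_ k) : #|[predD1 [pred j | c j != ord0] & i]| = 0%N by case: E.
by rewrite !inE Hk /= => /negbFE.
Qed.

Lemma exists_nz c : kc c == 1%N -> exists i, c i != ord0.
Proof.
move=> H; case: (pickP [pred j | c j != ord0]) => [i Hi|H0]; first by exists i.
by move: H; rewrite /kc eq_card0.
Qed.

Lemma card_single i :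
  #|[pred c : {ffun 'I_n -> 'I_r.+1} | (kc c == 1%N) && (c i != ord0)]| = r.
Proof.
pose f (v : 'I_r.+1) : {ffun 'I_n -> 'I_r.+1} := [ffun k => if k == i then v else ord0].
have finj : injective f.
  by move=> v1 v2 /(congr1 (fun c => c i)); rewrite !ffunE eqxx.
transitivity #|image f [pred v : 'I_r.+1 | v != ord0]|.
  apply: eq_card => c; rewrite !inE; apply/idP/imageP.
    move=> /andP[H1 Hi]; exists (c i) => //; apply/ffunP => k; rewrite ffunE.
    case: (eqVneq k i) => [->//|Hk]; apply/esym/eqP.
    by rewrite eq_sym (single_zero H1 Hi Hk).
  move=> [v Hv ->]; rewrite inE in Hv; rewrite ffunE eqxx Hv andbT.
  apply/eqP; rewrite /kc -(card1 i); apply: eq_card => k; rewrite !inE ffunE.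
  by case: (eqVneq k i) => //= ->.
rewrite card_image // cardC1 card_ord.
by [].
Qed.

End Count.

Lemma ReD (R : realType) (x y : R[i]) : complex.Re (x + y) = complex.Re x + complex.Re y.
Proof. by case: x; case: y. Qed.

Lemma Re_sum (R : realType) (I : Type) (rs : seq I) (P : pred I) (F : I -> R[i]) :
  complex.Re (\sum_(i <- rs | P i) F i) = \sum_(i <- rs | P i) complex.Re (F i).
Proof. by apply: (big_morph _ (@ReD R)). Qed.

Section Part1.
Variable R : realType.
Variable n : nat.
Variable m : err_model.
Local Notation r := (nerr m).
Local Open Scope complex_scope.
Variable U : 'M[R[i]]_n.
Hypothesis Htr : forall g g' : 'I_n, exists t : {perm 'I_n},
  t g = g' /\ exists phi : 'I_n -> R[i], forall x k, U x (t k) = phi x * U x k.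
Variable g0 : 'I_n.
Hypothesis r0 : (0 < r)%N.

Definition Q s (i : 'I_n) : R[i] :=
  \sum_(o : {ffun 'I_n -> 'I_n} | pattern o == s) \sum_(o' : {ffun 'I_n -> 'I_n} | pattern o' == s)
     (camp U o')^* * camp U o * (\sum_(sg : {perm 'I_n}) (sg i == i)%:R * G R sg o' o).

Definition T (i : 'I_n) : R := \sum_(s | ideal U s) complex.Re (Q s i).

Lemma herald_single (c : {ffun 'I_n -> 'I_r.+1}) i : kc c == 1%N -> c i != ord0 ->
  herald_pure U (labels c) = T i.
Proof.
move=> H1 Hi; apply: eq_bigr => s _; rewrite /pattern_prob; congr complex.Re.
apply: eq_bigr => o _; apply: eq_bigr => o' _; rewrite (@gram_single R n _ i) //.
  by move=> k Hk; apply/eqP; rewrite labels_eq0; exact: single_zero H1 Hi k Hk.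
by rewrite labels_eq0.
Qed.

Lemma sum_single : \sum_(c : {ffun 'I_n -> 'I_r.+1} | kc c == 1%N) herald_pure U (labels c)
  = r%:R * \sum_i T i.
Proof.
transitivity (\sum_(c : {ffun 'I_n -> 'I_r.+1} | kc c == 1%N) \sum_i (c i != ord0)%:R * T i).
  apply: eq_bigr => c H1; have [i Hi] := exists_nz H1.
  rewrite (bigD1 i) //= Hi mul1r (herald_single H1 Hi) big1 ?addr0 // => k Hk.
  by rewrite (single_zero H1 Hi Hk) mul0r.
rewrite exchange_big /= mulr_sumr; apply: eq_bigr => i _.
rewrite -mulr_suml; congr (_ * _).
transitivity ((#|[pred c : {ffun 'I_n -> 'I_r.+1} | (kc c == 1%N) && (c i != ord0)]|)%:R : R);
  last by rewrite card_single.
rewrite -sumr_const [RHS]big_mkcond [LHS]big_mkcond; apply: eq_bigr => c _.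
by rewrite inE; case: (kc c == 1%N); case: (c i != ord0).
Qed.


Lemma sumT : \sum_i T i = herald_pure U (labels (c0 n m)).
Proof.
rewrite /T exchange_big /=; apply: eq_bigr => s Hs.
have nz : \sum_(o | pattern o == s) camp U o != 0.
  move: Hs => /and3P[_ _]; rewrite /ideal_amp; apply: contraNneq => ->.
  by rewrite mulr0.
rewrite -Re_sum /Q (main_id Htr g0 nz) /pattern_prob; congr complex.Re.
apply: eq_bigr => o _; apply: eq_bigr => o' _; rewrite gram_const //.
by move=> k; apply/eqP; rewrite labels_eq0 ffunE.
Qed.

Lemma part1 : (0 < n)%N -> h_Phi1 m U = n%:R^-1 * h_eps m U 0.
Proof.
move=> n0; rewrite h0_eq /h_Phi1.
rewrite (_ : \sum_(c : {ffun 'I_n -> 'I_r.+1} | #|[pred i | c i != ord0]| == 1%N) herald_pure U (labels c)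
            = r%:R * \sum_i T i); last exact: sum_single.
rewrite sumT.
have nz : n%:R != 0 :> R by rewrite pnatr_eq0 -lt0n n0.
have rz : r%:R != 0 :> R by rewrite pnatr_eq0 -lt0n r0.
rewrite natrM; field; by apply/andP.
Qed.

End Part1.



Theorem theorem2 (R : realType) (ns : seq nat) (m : err_model) :
  all (fun k => 1 < k)%N ns ->
  (2 < dimn ns)%N ->
  err_valid m ->
  let U := fourier_tens R ns in
  let h := h_eps m U in
  h_Phi1 m U = (dimn ns)%:R^-1 * h 0
  /\ exists K delta : R, 0 < delta /\
       forall eps : R, 0 <= eps < delta ->
         `| h eps - (h 0 - (dimn ns - 1)%:R * h 0 * eps) | <= K * eps ^+ 2.
Proof.
move=> Hall Hn Hv U h.
have Hpos : all (fun k => 0 < k)%N ns by apply: sub_all Hall => k; exact: ltnW.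
have n0 : (0 < dimn ns)%N by apply: leq_trans Hn.
have r0 : (0 < nerr m)%N by move: Hv; clear h U; case: m.
have g0 : 'I_(dimn ns) := Ordinal n0.
have P1 : h_Phi1 m U = (dimn ns)%:R^-1 * h 0 := part1 (U_trans R Hpos) g0 r0 n0.
split => //.
exact: part2.
Qed.
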